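(* Let $R$ be an $n$-torsion clean ring (respectively, a strongly $n$-torsion clean ring). Then there exist finitely many elements $r_1,\ldots,r_k\in R$ with clean (respectively, strongly clean) decompositions $r_i=e_i+u_i$, $1\leq i\leq k$, such that $n=\mathrm{LCM}(o(u_1),\ldots,o(u_k))$. In particular: (1) if the unit group $U(R)$ has finite exponent $s$, then $n$ divides $s$; (2) if $R$ is commutative, then $U(R)$ contains an element of order $n$.
   Context: All rings are associative with identity. $o(u)$ denotes the order of a unit $u$ in $U(R)$. A clean decomposition of $r$ is $r=e+u$ with $e$ idempotent and $u$ a unit; it is strongly clean if also $eu=ue$. A ring $R$ is (strongly) $n$-torsion clean if every $r\in R$ can be written $r=e+u$ with $e^2=e$, $u\in U(R)$, $u^n=1$ (and $eu=ue$ in the strong case), and $n$ is the smallest natural number with this property. *)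

(* Defs.v *)
From HB Require Import structures.
From mathcomp Require Import all_boot all_order all_algebra.
Set Implicit Arguments. Unset Strict Implicit. Unset Printing Implicit Defensive.
Import GRing.Theory.
Local Open Scope ring_scope.

Definition idempotent_el (R : unitRingType) (e : R) : Prop := e * e = e.

Definition torsion_clean_with (strong : bool) (R : unitRingType) (m : nat) : Prop :=
  forall r : R, exists e u : R,
    [/\ idempotent_el e, u \is a GRing.unit, u ^+ m = 1, r = e + u
      & (strong -> e * u = u * e)].

Definition torsion_clean (strong : bool) (R : unitRingType) (n : nat) : Prop :=
  [/\ (0 < n)%N, torsion_clean_with strong R n
    & forall m : nat, (0 < m)%N -> torsion_clean_with strong R m -> (n <= m)%N].

Definition unit_order (R : unitRingType) (u : R) (k : nat) : Prop :=
  [/\ (0 < k)%N, u ^+ k = 1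
    & forall m : nat, (0 < m)%N -> u ^+ m = 1 -> (k <= m)%N].

Definition unit_exponent (R : unitRingType) (s : nat) : Prop :=
  [/\ (0 < s)%N, (forall u : R, u \is a GRing.unit -> u ^+ s = 1)
    & forall m : nat, (0 < m)%N ->
        (forall u : R, u \is a GRing.unit -> u ^+ m = 1) -> (s <= m)%N].

(* Main.v *)
Require Import Defs.
From HB Require Import structures.
From mathcomp Require Import all_boot all_order all_algebra.
From Stdlib Require Import Classical ClassicalEpsilon.
Import GRing.Theory.
Set Implicit Arguments. Unset Strict Implicit.
Local Open Scope ring_scope.

Lemma ord_dvd (R : unitRingType) (x : R) a m :
  unit_order x a -> x ^+ m = 1 -> (a %| m)%N.
Proof.
case=> a0 xa amin xm.
have xr : x ^+ (m %% a)%N = 1.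
  by move: xm; rewrite {1}(divn_eq m a) exprD mulnC exprM xa expr1n mul1r.
rewrite /dvdn; case E: (m %% a)%N => [//|k].
have := amin _ (ltn0Sn k); rewrite -E => /(_ xr); by rewrite leqNgt ltn_pmod.
Qed.

Lemma ord_exists (R : unitRingType) (x : R) m :
  (0 < m)%N -> x ^+ m = 1 -> exists o, unit_order x o.
Proof.
move=> m0 xm.
have ex : exists k, (0 < k)%N && (x ^+ k == 1) by exists m; rewrite m0 xm eqxx.
exists (ex_minn ex); case: ex_minnP => o /andP[o0 /eqP xo] omin.
split => // k k0 xk; apply: omin; by rewrite k0 xk eqxx.
Qed.

Lemma ord_pow (R : unitRingType) (x : R) a d :
  unit_order x a -> (d %| a)%N -> unit_order (x ^+ (a %/ d)) d.
Proof.
move=> xa da; have [a0 xa1 _] := xa.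
have d0 : (0 < d)%N by apply: dvdn_gt0 da.
split => //; first by rewrite -exprM divnK.
move=> m m0; rewrite -exprM => /(ord_dvd xa).
move=> h; have : (a %/ d * d %| a %/ d * m)%N by rewrite divnK.
rewrite dvdn_pmul2l; first by move=> /dvdn_leq; apply.
by rewrite divn_gt0 // dvdn_leq.
Qed.

Lemma ord_mul (R : unitRingType) (x y : R) a b :
  x * y = y * x -> unit_order x a -> unit_order y b -> coprime a b ->
  unit_order (x * y) (a * b).
Proof.
move=> cxy xa yb cab; have [a0 xa1 _] := xa; have [b0 yb1 _] := yb.
split; first by rewrite muln_gt0 a0.
  by rewrite exprMn_comm // exprM xa1 expr1n mul1r mulnC exprM yb1 expr1n.
move=> m m0; rewrite exprMn_comm // => h.
have cm : GRing.comm (x ^+ m) (y ^+ m).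
  apply: commrX; apply: commr_sym; apply: commrX; exact: commr_sym.
have hx : x ^+ (m * b) = 1.
  have e : (x ^+ m * y ^+ m) ^+ b = 1 by rewrite h expr1n.
  move: e; rewrite exprMn_comm // -!exprM (mulnC m b) [y ^+ (b * m)]exprM yb1 expr1n mulr1.
  by rewrite mulnC.
have hy : y ^+ (m * a) = 1.
  have e : (x ^+ m * y ^+ m) ^+ a = 1 by rewrite h expr1n.
  move: e; rewrite exprMn_comm // -!exprM (mulnC m a) [x ^+ (a * m)]exprM xa1 expr1n mul1r.
  by rewrite mulnC.
have am : (a %| m)%N by rewrite -(Gauss_dvdl _ cab); exact: ord_dvd xa hx.
have bm : (b %| m)%N.
  by rewrite -(Gauss_dvdl _ (etrans (coprime_sym b a) cab)); exact: ord_dvd yb hy.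
by apply: dvdn_leq => //; rewrite Gauss_dvd // am bm.
Qed.

Lemma lcm_split a b : (0 < a)%N -> (0 < b)%N ->
  exists a1 b1, [/\ (a1 %| a)%N, (b1 %| b)%N, coprime a1 b1 & (a1 * b1)%N = lcmn a b].
Proof.
move=> a0 b0.
pose pi : nat_pred := [pred p | logn p b <= logn p a]%N.
have l0 : (0 < lcmn a b)%N by rewrite lcmn_gt0 a0.
exists (a`_pi)%N, (b`_pi^')%N; split; [exact: dvdn_part|exact: dvdn_part|exact: coprime_partC|].
rewrite -(partnC pi l0); congr (_ * _)%N.
  apply: eq_partn_from_log => // p pip.
  by rewrite logn_lcm //; apply/esym/maxn_idPl.
apply: eq_partn_from_log => // p pip.
rewrite logn_lcm //; apply/esym/maxn_idPr.
by move: pip; rewrite !inE -ltnNge => /ltnW.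
Qed.

Lemma ord_lcm (R : unitRingType) (x y : R) a b :
  x * y = y * x -> unit_order x a -> unit_order y b ->
  exists i j, unit_order (x ^+ i * y ^+ j) (lcmn a b).
Proof.
move=> cxy xa yb; have [a0 _ _] := xa; have [b0 _ _] := yb.
have [a1 [b1 [da db cab <-]]] := lcm_split a0 b0.
exists (a %/ a1)%N, (b %/ b1)%N; apply: ord_mul => //; last exact: ord_pow.
  apply: commrX; apply: commr_sym; apply: commrX; exact: commr_sym.
exact: ord_pow.
Qed.

Lemma ord_biglcm (R : unitRingType) (hc : forall x y : R, x * y = y * x) k
  (u : 'I_k -> R) (o : 'I_k -> nat) :
  (forall i, u i \is a GRing.unit /\ unit_order (u i) (o i)) ->
  exists z : R, z \is a GRing.unit /\ unit_order z (\big[lcmn/1%N]_(i < k) o i).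
Proof.
elim: k u o => [|k IH] u o H.
  exists 1; rewrite big_ord0; split; first exact: unitr1.
  by split => //; rewrite expr1.
have [z [zu zo]] := IH (fun i => u (widen_ord (leqnSn k) i)) (fun i => o (widen_ord (leqnSn k) i)) (fun i => H _).
have [uu uo] := H ord_max.
have [i [j hij]] := ord_lcm (hc z (u ord_max)) zo uo.
exists (z ^+ i * u ord_max ^+ j); split; first by rewrite unitrMl ?unitrX.
by rewrite big_ord_recr.
Qed.

Theorem lemma1p1 (strong : bool) (R : unitRingType) (n : nat) :
  torsion_clean strong R n ->
  [/\ (exists (k : nat) (e u : 'I_k -> R) (o : 'I_k -> nat),
         (forall i : 'I_k,
            [/\ idempotent_el (e i), u i \is a GRing.unit,
                unit_order (u i) (o i) & (strong -> e i * u i = u i * e i)]) /\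
         n = \big[lcmn/1%N]_(i < k) o i),
      (forall s : nat, unit_exponent R s -> (n %| s)%N)
    & ((forall x y : R, x * y = y * x) ->
         exists u : R, u \is a GRing.unit /\ unit_order u n)].
Proof.
case=> n0 Htc Hmin.
pose P (i : nat) := (i %| n)%N /\ exists e u : R,
  [/\ idempotent_el e, u \is a GRing.unit, unit_order u i & (strong -> e * u = u * e)].
have key : forall i : 'I_n.+1, exists t : R * R * nat,
  [/\ idempotent_el t.1.1, t.1.2 \is a GRing.unit, unit_order t.1.2 t.2,
      (strong -> t.1.1 * t.1.2 = t.1.2 * t.1.1) & (t.2 %| n)%N] /\ (P i -> t.2 = i).
  move=> i; case: (classic (P i)) => [Pi|nPi].
    have [di [e [u [ie uu uo ce]]]] := Pi.
    by exists (e, u, nat_of_ord i).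
  exists (0, 1, 1%N); split => //; split => /=.
  - by rewrite /idempotent_el mul0r.
  - exact: unitr1.
  - by split => //; rewrite expr1.
  - by move=> _; rewrite mul0r mulr0.
  - exact: dvd1n.
pose f i := proj1_sig (constructive_indefinite_description _ (key i)).
have fP i : _ := proj2_sig (constructive_indefinite_description _ (key i)).
pose e i := (f i).1.1; pose u i := (f i).1.2; pose o i := (f i).2.
have Hi : forall i, [/\ idempotent_el (e i), u i \is a GRing.unit,
   unit_order (u i) (o i), (strong -> e i * u i = u i * e i) & (o i %| n)%N].
  by move=> i; have [] := fP i.
have HP : forall i : 'I_n.+1, P i -> o i = i by move=> i; have [] := fP i.
pose L := \big[lcmn/1%N]_(i < n.+1) o i.
have Ln : (L %| n)%N by apply/dvdn_biglcmP => i _; have [] := Hi i.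
have L0 : (0 < L)%N by apply: dvdn_gt0 Ln.
have nL : n = L.
  apply/eqP; rewrite eqn_leq (dvdn_leq n0 Ln) andbT; apply: Hmin => // r.
  have [e' [u' [ie uu un ru ce]]] := Htc r.
  have [o' ho'] := ord_exists n0 un.
  have on : (o' %| n)%N := ord_dvd ho' un.
  have ol : (o' < n.+1)%N by rewrite ltnS dvdn_leq.
  have Pi : P (Ordinal ol) by split => //; exists e', u'.
  have oL : (o' %| L)%N.
    by apply: (biglcmn_sup (Ordinal ol)) => //; rewrite HP.
  exists e', u'; split => //.
  have [_ o1 _] := ho'.
  by rewrite -(divnK oL) mulnC exprM o1 expr1n.
split.
- exists n.+1, e, u, o; split => // i; by have [] := Hi i.
- move=> s [s0 Hs _]; rewrite nL; apply/dvdn_biglcmP => i _.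
  have [_ ui oi _ _] := Hi i; exact: ord_dvd oi (Hs _ ui).
- move=> hc; rewrite nL /L; apply: (@ord_biglcm R hc n.+1 u o) => i.
  by have [_ ui oi _ _] := Hi i; split.
Qed.
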